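(* Let $$Q_1(x) = x^{q^2+1} + 1 + x^t\, R(x) + x^t \sum_{j=0}^{\log_2\sqrt{q/2}\,-1} x^{2^j(\sqrt{2q}-2)t}\,\bigl(1 + x^{\sqrt{2q}\,t}\bigr)^{2^j-1},$$ where $$R(x) = \frac{1 + x^{\sqrt{2q}\,t(\sqrt{q/2}-1)}}{1 + x^{\sqrt{2q}\,t}} = \sum_{i=0}^{\sqrt{q/2}-2} x^{i\sqrt{2q}\,t}$$ (a polynomial over $\mathbb{F}_2$). Then the set of solutions of $Q_1(x) = 0$ is exactly $\mathcal{T}_1$.
   Context: Let $q = 2^m$ with $m \ge 3$ odd, so that $\sqrt{2q} = 2^{(m+1)/2}$ and $\sqrt{q/2} = 2^{(m-1)/2}$ are integers. Let $E = \mathbb{F}_{q^4}$, and put $s = q - \sqrt{2q} + 1$ and $t = q + \sqrt{2q} + 1$. Let $\mathcal{O}_s = \{x \in E \mid x^s = 1\}$ and $\mathcal{O}_t = \{x \in E \mid x^t = 1\}$. Define $$\mathcal{T}_1 = \mathcal{O}_t \cup \left\{\left(u^{q-1} + u^{-(q-1)}\right)^{q-1} uv \;\middle|\; u \in \mathcal{O}_s \setminus \{1\},\ v \in \mathcal{O}_t\right\}.$$ *)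

(* Defs.v *)
From HB Require Import structures.
From mathcomp Require Import all_boot all_order all_algebra all_field.
Set Implicit Arguments. Unset Strict Implicit. Unset Printing Implicit Defensive.
Import GRing.Theory.
Local Open Scope ring_scope.

(* Parameters, for q = 2^m with m odd, m >= 3. *)
Definition qq (m : nat) : nat := 2 ^ m.
(* sqrt(2q) = 2^((m+1)/2) *)
Definition sq2q (m : nat) : nat := 2 ^ (m.+1 %/ 2).
(* sqrt(q/2) = 2^((m-1)/2);  log_2 sqrt(q/2) = (m-1)/2 *)
Definition sqq2 (m : nat) : nat := 2 ^ (m.-1 %/ 2).
Definition log_sqq2 (m : nat) : nat := m.-1 %/ 2.
Definition ss (m : nat) : nat := (qq m + 1 - sq2q m)%N.
Definition tt (m : nat) : nat := (qq m + sq2q m + 1)%N.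

Definition Rpoly (m : nat) (F : fieldType) (x : F) : F :=
  \sum_(i < (sqq2 m).-1) x ^+ (i * sq2q m * tt m).

Definition Q1 (m : nat) (F : fieldType) (x : F) : F :=
  x ^+ (qq m ^ 2 + 1) + 1 + x ^+ tt m * Rpoly m x
  + x ^+ tt m * \sum_(j < log_sqq2 m)
        x ^+ (2 ^ j * (sq2q m - 2) * tt m) * (1 + x ^+ (sq2q m * tt m)) ^+ (2 ^ j - 1).

Definition T1 (m : nat) (F : fieldType) (x : F) : Prop :=
  x ^+ tt m = 1 \/
  exists u v : F,
    [/\ u ^+ ss m = 1, u != 1, v ^+ tt m = 1 &
        x = (u ^+ (qq m - 1) + (u ^+ (qq m - 1))^-1) ^+ (qq m - 1) * u * v].

(* Main.v *)
Require Import Defs.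
From HB Require Import structures.
From mathcomp Require Import all_boot all_order all_algebra all_field.
From mathcomp Require Import ring zify.
From mathcomp Require Import cyclic.
Set Implicit Arguments. Unset Strict Implicit. Unset Printing Implicit Defensive.
Import GRing.Theory.
Local Open Scope ring_scope.

Section Char2.
Variable E : fieldType.
Hypothesis ch2 : 2 \in [pchar E].

Lemma sqrD2 (a b : E) : (a + b) ^+ 2 = a ^+ 2 + b ^+ 2.
Proof. exact: (pFrobenius_autD_comm ch2 (mulrC a b)). Qed.

Lemma frD e (a b : E) : (a + b) ^+ (2 ^ e) = a ^+ (2 ^ e) + b ^+ (2 ^ e).
Proof. elim: e => [|e IH]; first by rewrite !expr1. by rewrite expnSr !exprM IH sqrD2. Qed.

Lemma fr_sum e I (r : seq I) (P : pred I) (F : I -> E) :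
  (\sum_(i <- r | P i) F i) ^+ (2 ^ e) = \sum_(i <- r | P i) F i ^+ (2 ^ e).
Proof.
elim/big_rec2: _ => [|i x y _ <-]; last by rewrite frD.
by rewrite expr0n expn_eq0.
Qed.

Lemma fr_inj e (a b : E) : a ^+ (2 ^ e) = b ^+ (2 ^ e) -> a = b.
Proof.
move=> h; apply/eqP; rewrite -subr_eq0.
have: (a - b) ^+ (2 ^ e) == 0 by rewrite (oppr_pchar2 ch2) frD h addrr_pchar2.
by rewrite expf_eq0 => /andP[_].
Qed.

Lemma fr_eq1 e (a : E) : a ^+ (2 ^ e) = 1 -> a = 1.
Proof. by move=> h; apply: (@fr_inj e); rewrite h expr1n. Qed.

Lemma add1_eq0 (x : E) : (x + 1 == 0) = (x == 1).
Proof. by rewrite -{1}(oppr_pchar2 ch2 1) subr_eq0. Qed.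

Lemma sum2_eq0 (x y : E) : x + y = 0 -> x = y.
Proof. by move/eqP; rewrite -{1}(oppr_pchar2 ch2 y) subr_eq0 => /eqP. Qed.

Lemma two0 : (2%:R : E) = 0.
Proof. by apply/eqP; case/andP: ch2. Qed.

Lemma geo2 (y : E) n : (1 + y) * \sum_(i < n) y ^+ i = 1 + y ^+ n.
Proof.
elim: n => [|n IH]; first by rewrite big_ord0 mulr0 expr0 addrr_pchar2.
rewrite big_ord_recr /= mulrDr IH mulrDl mul1r -exprS -addrA (addrA (y ^+ n)).
by rewrite addrr_pchar2 // add0r.
Qed.

Lemma tele2 (X : E) k : \sum_(j < k) (X ^+ 2 + X ^+ 4) ^+ (2 ^ j) = X ^+ 2 + X ^+ (2 ^ k.+1).
Proof.
elim: k => [|k IH]; first by rewrite big_ord0 expn1 addrr_pchar2.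
rewrite big_ord_recr /= IH frD -!exprM.
have -> : (2 * 2 ^ k = 2 ^ k.+1)%N by rewrite expnS.
have -> : (4 * 2 ^ k = 2 ^ k.+2)%N by rewrite !expnS mulnA.
by rewrite -addrA (addKr_pchar2 ch2).
Qed.

Definition G (m : nat) (z : E) : E :=
  z ^+ ss m + 1 + z * \sum_(i < (sqq2 m).-1) z ^+ (i * sq2q m)
  + z * \sum_(j < log_sqq2 m) z ^+ (2 ^ j * (sq2q m - 2)) * (1 + z ^+ sq2q m) ^+ (2 ^ j - 1).

Lemma G_fr e m z : G m (z ^+ (2 ^ e)) = (G m z) ^+ (2 ^ e).
Proof.
rewrite /G !frD !exprMn !fr_sum expr1n.
congr (_ + _ + _ * _ + _ * _); first by rewrite exprAC.
  by apply: eq_bigr => i _; rewrite exprAC.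
apply: eq_bigr => i _; rewrite exprMn; congr (_ * _); first by rewrite exprAC.
rewrite [RHS]exprAC frD expr1n; congr ((_ + _) ^+ _); exact: exprAC.
Qed.

End Char2.

Section Ident.
Variable E : fieldType.
Lemma e1_id (v P : E) : v != 0 -> P != 0 -> v + 1 != 0 -> v ^+ 2 + 1 != 0 -> v ^+ 2 * P + 1 != 0 -> P + 1 != 0 -> v ^+ 2 * P ^+ 2 + 1 != 0 ->
  (v ^+ 2 * (v ^+ 2 * P ^+ 2 + 1) / (v ^+ 2 + 1)) / ((v ^+ 2 * P + 1) / (P + 1)) ^+ 2 * (1 + (v ^+ 2 * (v ^+ 2 * P ^+ 2 + 1) / (v ^+ 2 + 1))) + ((v * P + 1) / (v + 1)) ^+ 2 + ((v * P + 1) / (v + 1)) ^+ 4 = 2%:R * ((1 + v + 3%:R * v * P + 3%:R * v^+2 + 5%:R * v^+2 * P + 4%:R * v^+2 * P^+2 + 4%:R * v^+3 + 13%:R * v^+3 * P + 9%:R * v^+3 * P^+2 + 2%:R * v^+3 * P^+3 + 6%:R * v^+4 + 17%:R * v^+4 * P + 17%:R * v^+4 * P^+2 + 8%:R * v^+4 * P^+3 + v^+4 * P^+4 + 7%:R * v^+5 + 21%:R * v^+5 * P + 25%:R * v^+5 * P^+2 + 13%:R * v^+5 * P^+3 + 6%:R * v^+5 * P^+4 + 7%:R * v^+6 + 19%:R * v^+6 * P + 26%:R * v^+6 * P^+2 + 26%:R * v^+6 * P^+3 + 9%:R * v^+6 * P^+4 + v^+6 * P^+5 + 4%:R * v^+7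 + 11%:R * v^+7 * P + 25%:R * v^+7 * P^+2 + 29%:R * v^+7 * P^+3 + 17%:R * v^+7 * P^+4 + 2%:R * v^+7 * P^+5 + v^+8 + 3%:R * v^+8 * P + 17%:R * v^+8 * P^+2 + 32%:R * v^+8 * P^+3 + 18%:R * v^+8 * P^+4 + 3%:R * v^+8 * P^+5 + v^+8 * P^+6 + 9%:R * v^+9 * P^+2 + 19%:R * v^+9 * P^+3 + 14%:R * v^+9 * P^+4 + 8%:R * v^+9 * P^+5 + 2%:R * v^+9 * P^+6 + 2%:R * v^+10 * P^+2 + 6%:R * v^+10 * P^+3 + 9%:R * v^+10 * P^+4 + 7%:R * v^+10 * P^+5 + 4%:R * v^+10 * P^+6 + v^+11 * P^+3 + 3%:R * v^+11 * P^+4 + 6%:R * v^+11 * P^+5 + 2%:R * v^+11 * P^+6 + v^+12 * P^+4 + v^+12 * P^+5 + v^+12 * P^+6) / ((v^+2 + 1)^+2 * (v^+2 * P + 1)^+2 * (v + 1)^+4)).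
Proof. move=> *. field. by rewrite ?exprMn; repeat (apply/andP; split). Qed.
Lemma e2_id (v P : E) : v != 0 -> P != 0 -> v + 1 != 0 -> v ^+ 2 + 1 != 0 -> v ^+ 2 * P + 1 != 0 -> P + 1 != 0 -> v ^+ 2 * P ^+ 2 + 1 != 0 ->
  (1 + (v ^+ 2 * (v ^+ 2 * P ^+ 2 + 1) / (v ^+ 2 + 1))) * ((v ^+ 2 * P * (P + 1) / (v ^+ 2 * P + 1)) * ((v ^+ 2 * P + 1) / (P + 1)) / (v ^+ 2 * (v ^+ 2 * P ^+ 2 + 1) / (v ^+ 2 + 1)) + 1) + ((v ^+ 2 * P + 1) / (P + 1)) * (1 + (v ^+ 2 * P * (P + 1) / (v ^+ 2 * P + 1)) / (v ^+ 2 * (v ^+ 2 * P ^+ 2 + 1) / (v ^+ 2 + 1))) + ((v ^+ 2 * P + 1) / (P + 1)) * (((v * P + 1) / (v + 1)) ^+ 2 + ((P + 1) / (v ^+ 2 * P + 1))) = 2%:R * ((2%:R * v^+2 + 2%:R * v^+2 * P + v^+2 * P^+2 + 3%:R * v^+3 + 5%:R * v^+3 * P + 2%:R * v^+3 * P^+2 + 4%:R * v^+4 + 9%:R * v^+4 * P + 8%:R * v^+4 * P^+2 + 2%:R * v^+4 * P^+3 + 4%:R * v^+5 + 13%:R * v^+5 * P + 14%:R * v^+5 * P^+2 + 5%:R * v^+5 * P^+3 + 2%:R * v^+6 + 11%:R * v^+6 * P + 16%:R * v^+6 * P^+2 + 11%:R * v^+6 * P^+3 + 2%:R * v^+6 *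 P^+4 + 8%:R * v^+7 * P + 19%:R * v^+7 * P^+2 + 16%:R * v^+7 * P^+3 + 5%:R * v^+7 * P^+4 + 4%:R * v^+8 * P + 11%:R * v^+8 * P^+2 + 14%:R * v^+8 * P^+3 + 7%:R * v^+8 * P^+4 + 2%:R * v^+8 * P^+5 + 4%:R * v^+9 * P^+2 + 11%:R * v^+9 * P^+3 + 10%:R * v^+9 * P^+4 + 3%:R * v^+9 * P^+5 + 2%:R * v^+10 * P^+2 + 5%:R * v^+10 * P^+3 + 6%:R * v^+10 * P^+4 + 3%:R * v^+10 * P^+5 + v^+10 * P^+6 + 2%:R * v^+11 * P^+4 + 3%:R * v^+11 * P^+5 + v^+11 * P^+6 + v^+12 * P^+4 + v^+12 * P^+5 + v^+12 * P^+6) / ((v^+2 + 1) * (v + 1)^+2 * v^+2 * (v^+2 * P + 1) * (P + 1) * (v^+2 * P^+2 + 1))).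
Proof. move=> *. field. by rewrite ?exprMn; repeat (apply/andP; split). Qed.
End Ident.

Lemma par k : [/\ sq2q (k.*2.+1) = (2 ^ k.+1)%N, sqq2 (k.*2.+1) = (2 ^ k)%N,
  log_sqq2 (k.*2.+1) = k & qq (k.*2.+1) = (2 ^ k.*2.+1)%N].
Proof.
rewrite /sq2q /sqq2 /log_sqq2 /qq /=; split => //.
- by rewrite -doubleS -muln2 mulnK.
- by rewrite -muln2 mulnK.
- by rewrite -muln2 mulnK.
Qed.

Lemma natf k (a := (2 ^ k)%N) : (0 < k)%N ->
  [/\ (2 ^ k.+1 = 2 * a)%N, (2 ^ k.*2.+1 = 2 * a * a)%N & (2 <= a)%N].
Proof.
move=> k0; split.
- by rewrite expnS.
- by rewrite expnS -addnn expnD mulnA.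
- by rewrite /a -(expn1 2) leq_exp2l.
Qed.

Ltac nz := rewrite ?exprMn; repeat (apply/andP; split); rewrite ?mulf_neq0 ?expf_neq0 ?invr_eq0 //.

Lemma expand4 (E : comNzRingType) (w A z R S : E) :
  w * (A + 1 + z * R + z * S) = w * (A + 1) + z * (w * R) + z * (w * S).
Proof. ring. Qed.

Lemma nat1 (a : nat) : (2 <= a -> 2*a*a + 1 - 2*a + 2*a = 2*a*a+1)%N. Proof. nia. Qed.
Lemma nat2 (a : nat) : (2 <= a -> 2 <= 2 * a)%N. Proof. nia. Qed.

Section Core.
Variable E : fieldType.
Hypothesis ch2 : 2 \in [pchar E].

Lemma zr k (v P : E) : v != 0 -> v ^+ 2 + 1 != 0 ->
  v ^+ (2 ^ k.+1) = v ^+ 2 * P -> P ^+ (2 ^ k.+1) = (v ^+ 2)^-1 ->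
  ((v ^+ 2 * P + 1) / (P + 1)) ^+ (2 ^ k.+1) = v ^+ 2 * (v ^+ 2 * P ^+ 2 + 1) / (v ^+ 2 + 1).
Proof.
move=> v0 hv21 hvr hPr.
rewrite expr_div_n !(frD ch2) !expr1n exprMn exprAC hvr hPr.
have hvi : (v ^+ 2)^-1 + 1 = (v ^+ 2 + 1) / v ^+ 2 by field; nz.
rewrite hvi; field; nz.
Qed.

Lemma zq k (v P : E) : v != 0 -> P != 0 -> v ^+ 2 * P + 1 != 0 ->
  v ^+ (2 ^ k.*2.+1) = v * P -> P ^+ (2 ^ k.*2.+1) = (v ^+ 2 * P)^-1 ->
  ((v ^+ 2 * P + 1) / (P + 1)) ^+ (2 ^ k.*2.+1) = v ^+ 2 * P * (P + 1) / (v ^+ 2 * P + 1).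
Proof.
move=> v0 P0 h1 hvq hPq.
rewrite expr_div_n !(frD ch2) !expr1n exprMn exprAC hvq hPq.
have hvi : (v ^+ 2 * P)^-1 + 1 = (v ^+ 2 * P + 1) / (v ^+ 2 * P) by field; nz.
rewrite hvi; field; nz.
Qed.

Lemma core k (v P : E) : (0 < k)%N -> v != 0 -> P != 0 -> v != 1 -> P != 1 ->
  v ^+ 2 * P != 1 -> v * P != 1 ->
  v ^+ (2 ^ k.+1) = v ^+ 2 * P -> P ^+ (2 ^ k.+1) = (v ^+ 2)^-1 ->
  v ^+ (2 ^ k.*2.+1) = v * P -> P ^+ (2 ^ k.*2.+1) = (v ^+ 2 * P)^-1 ->
  G (k.*2.+1) ((v ^+ 2 * P + 1) / (P + 1)) = 0.
Proof.
move=> k0 v0 P0 v1 P1 v2P1 vP1 hvr hPr hvq hPq.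
have [er eq a2] := natf k0.
have hv1 : v + 1 != 0 by rewrite (add1_eq0 ch2).
have hv21 : v ^+ 2 + 1 != 0 by rewrite -[1](expr1n _ 2) -(sqrD2 ch2) expf_neq0.
have hv2P1 : v ^+ 2 * P + 1 != 0 by rewrite (add1_eq0 ch2).
have hP1 : P + 1 != 0 by rewrite (add1_eq0 ch2).
have hv2P21 : v ^+ 2 * P ^+ 2 + 1 != 0.
  by rewrite -exprMn -[1](expr1n _ 2) -(sqrD2 ch2) expf_neq0 // (add1_eq0 ch2).
have hY := zr v0 hv21 hvr hPr.
have hZQ := zq v0 P0 hv2P1 hvq hPq.
rewrite /G /ss; case: (par k) => -> -> -> ->.
set z := (v ^+ 2 * P + 1) / (P + 1) in hY hZQ *.
set Y := v ^+ 2 * (v ^+ 2 * P ^+ 2 + 1) / (v ^+ 2 + 1) in hY *.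
set ZQ := v ^+ 2 * P * (P + 1) / (v ^+ 2 * P + 1) in hZQ *.
set r := (2 ^ k.+1)%N in hY hvr hPr er *.
set q := (2 ^ k.*2.+1)%N in hZQ hvq hPq eq *.
set a := (2 ^ k)%N in er eq a2 *.
have z0 : z != 0 by rewrite mulf_neq0 ?invr_eq0.
have Y0 : Y != 0 by rewrite -hY expf_neq0.
have z1 : z != 1.
  apply: contra v1 => /eqP hz; apply/eqP.
  have : (v ^+ 2 * P + 1) = P + 1.
    by move: hz; rewrite /z => /(congr1 (fun x => x * (P + 1))); rewrite mulfVK // mul1r.
  move/addIr => h.
  have : (v ^+ 2 - 1) * P = 0 by rewrite mulrBl h mul1r subrr.
  move/eqP; rewrite mulf_eq0 (negbTE P0) orbF subr_eq0 => /eqP h2.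
  by apply: (@fr_inj _ ch2 1); rewrite expn1 h2 expr1n.
have h1Y : 1 + Y != 0.
  rewrite addrC (add1_eq0 ch2) -hY; apply: contra z1 => /eqP.
  by move/(@fr_eq1 _ ch2 k.+1) => ->.
have hzs : z ^+ (q + 1 - r) = ZQ * z / Y.
  apply: (mulIf Y0); rewrite divfK // -{1}hY -exprD.
  have -> : (q + 1 - r + r = q + 1)%N by rewrite er eq; apply: nat1.
  by rewrite exprD expr1 hZQ.
have hR : \sum_(i < a.-1) z ^+ (i * r) = \sum_(i < a.-1) Y ^+ i.
  by apply: eq_bigr => i _; rewrite mulnC exprM hY.
have hYn : Y ^+ a.-1 = ZQ / Y.
  apply: (mulIf Y0); rewrite divfK // -exprSr prednK; last exact: ltnW.
  by rewrite -hY -exprM -hZQ er eq.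
have hS : (1 + Y) * \sum_(j < k) z ^+ (2 ^ j * (r - 2)) * (1 + z ^+ r) ^+ (2 ^ j - 1)
    = \sum_(j < k) (z ^+ (r - 2) * (1 + Y)) ^+ (2 ^ j).
  rewrite hY mulr_sumr; apply: eq_bigr => j _.
  by rewrite [RHS]exprMn -exprM (mulnC (r - 2)%N) mulrCA -exprS subn1 prednK ?expn_gt0.
have hz2 : z ^+ (r - 2) = Y / z ^+ 2.
  apply: (mulIf (expf_neq0 2 z0)); rewrite divfK ?expf_neq0 // -exprD subnK ?hY //.
  by rewrite er; apply: nat2.
have hA : z ^+ (r - 2) * (1 + Y) = ((v * P + 1) / (v + 1)) ^+ 2 + ((v * P + 1) / (v + 1)) ^+ 4.
  rewrite hz2; apply: (sum2_eq0 ch2).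
  have := e1_id v0 P0 hv1 hv21 hv2P1 hP1 hv2P21.
  by rewrite (two0 ch2) mul0r -addrA.
have hXr : ((v * P + 1) / (v + 1)) ^+ r = (P + 1) / (v ^+ 2 * P + 1).
  rewrite expr_div_n !(frD ch2) !expr1n exprMn hvr hPr.
  field; nz.
apply: (mulfI h1Y); rewrite mulr0.
rewrite expand4 hR (geo2 ch2) hYn hS; under eq_bigr => j _ do rewrite hA.
rewrite (tele2 ch2) hXr hzs.
have := e2_id v0 P0 hv1 hv21 hv2P1 hP1 hv2P21.
by rewrite (two0 ch2) mul0r.
Qed.
End Core.

Lemma nat3 (a : nat) : (2 <= a -> (2*a - 2) * (2*a) + 2 * (2*a) = (2*a) * (2*a))%N. Proof. nia. Qed.
Lemma nat4 (a : nat) : ((2*a) * (2*a) = 2 * (2*a*a))%N. Proof. nia. Qed.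
Lemma nat5 (a : nat) : (2 <= a -> 0 < 2*a*a + 1 - 2*a)%N. Proof. nia. Qed.
Lemma nat6 (a : nat) : (2 <= a -> 0 < 2*a*a)%N. Proof. nia. Qed.
Lemma nat7 (a : nat) : (2 <= a -> 2 + (2*a - 2) = 2 * a)%N. Proof. nia. Qed.

Section ULevel.
Variable E : fieldType.
Hypothesis ch2 : 2 \in [pchar E].

Lemma ulem k (u : E) : (0 < k)%N -> u ^+ (2 ^ k.*2.+1 + 1 - 2 ^ k.+1) = 1 -> u != 1 ->
  exists z, [/\ ((u ^+ (2 ^ k.*2.+1 - 1) + (u ^+ (2 ^ k.*2.+1 - 1))^-1) ^+ (2 ^ k.*2.+1 - 1) * u)
                   ^+ (2 ^ k.*2.+1 + 2 ^ k.+1 + 1) = z ^+ (2 ^ k.+1),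
     G (k.*2.+1) z = 0, z ^+ (2 ^ k.*2.+1) * z = u ^+ (2 ^ k.+2) &
     (u ^+ (2 ^ k.*2.+1 - 1) + (u ^+ (2 ^ k.*2.+1 - 1))^-1) ^+ (2 ^ k.*2.+1 - 1) * u != 0].
Proof.
move=> k0 hus u1.
have [er eq a2] := natf k0.
set r := (2 ^ k.+1)%N in hus er *.
set q := (2 ^ k.*2.+1)%N in hus eq *.
set a := (2 ^ k)%N in er eq a2.
have u0 : u != 0.
  apply: contra_eq_neq hus => ->; rewrite expr0n.
  have -> : (q + 1 - r == 0)%N = false by rewrite er eq; apply/negbTE; rewrite -lt0n nat5.
  by rewrite eq_sym oner_eq0.
set U := u ^+ (r - 2).
have U0 : U != 0 by rewrite expf_neq0.
have hur : u ^+ r = u ^+ 2 * U by rewrite -exprD er nat7.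
have huq : u ^+ q = u * U.
  apply: (mulIf u0); rewrite -exprSr -addn1.
  have -> : (q + 1 = (q + 1 - r) + r)%N by rewrite er eq nat1.
  by rewrite exprD hus mul1r hur; ring.
have huq1 : u ^+ (q - 1) = U.
  apply: (mulIf u0); rewrite -exprSr subn1 prednK; last by rewrite eq nat6.
  by rewrite huq mulrC.
have hu2q : u ^+ (r * r) = (u * U) ^+ 2 by rewrite er nat4 -eq mulnC exprM huq.
have hUr : U ^+ r = (u ^+ 2)^-1.
  have h : U ^+ r * (u ^+ 2 * U) ^+ 2 = (u * U) ^+ 2.
    have e : ((r - 2) * r + r * 2 = r * r)%N by rewrite (mulnC r 2) er nat3.
    by rewrite -hur /U -!exprM -exprD e hu2q.
  apply: (mulIf (expf_neq0 2 (mulf_neq0 (expf_neq0 2 u0) U0))); rewrite h; field; nz.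
have hUr2 : U ^+ (r - 2) * U ^+ 2 = (u ^+ 2)^-1 by rewrite -exprD subnK ?hUr // er nat2.
have hUq : U ^+ q = (u ^+ 2 * U)^-1.
  have -> : U ^+ q = (u ^+ q) ^+ (r - 2) by rewrite /U -!exprM mulnC.
  rewrite huq exprMn -/U.
  have -> : U ^+ (r - 2) = (u ^+ 2)^-1 / U ^+ 2.
    by apply: (mulIf (expf_neq0 2 U0)); rewrite divfK ?expf_neq0.
  field; nz.
have U1 : U != 1.
  apply: contra u1 => /eqP U1.
  rewrite U1 mulr1 in hur huq.
  have h1 : u ^+ (r * r) = u ^+ (2 * 2) by rewrite exprM hur exprAC hur -exprM.
  have h2 : u ^+ (r * r) = u ^+ 2 * 1 by rewrite hu2q U1 !mulr1.
  have : u ^+ 2 * u ^+ 2 = u ^+ 2 * 1 by rewrite -exprD -h2 h1.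
  move/(mulfI (expf_neq0 2 u0)) => h3.
  by apply/eqP; apply: (@fr_inj _ ch2 1); rewrite expn1 h3 expr1n.
have u21 : u ^+ 2 != 1.
  apply: contra u1 => /eqP h; apply/eqP; apply: (@fr_eq1 _ ch2 1); by rewrite expn1.
have U21 : U ^+ 2 != 1.
  apply: contra U1 => /eqP h; apply/eqP; apply: (@fr_eq1 _ ch2 1); by rewrite expn1.
have hv2P : (u ^+ 2) ^+ 2 * U ^+ 2 != 1.
  rewrite -exprMn -hur; apply: contra u1 => /eqP h; apply/eqP.
  apply: (@fr_eq1 _ ch2 k.+1); apply: (@fr_eq1 _ ch2 1); by rewrite expn1.
have hvP : u ^+ 2 * U ^+ 2 != 1.
  rewrite -exprMn -huq; apply: contra u1 => /eqP h; apply/eqP.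
  apply: (@fr_eq1 _ ch2 k.*2.+1); apply: (@fr_eq1 _ ch2 1); by rewrite expn1.
have hvr : (u ^+ 2) ^+ r = (u ^+ 2) ^+ 2 * U ^+ 2 by rewrite exprAC hur exprMn.
have hPr : (U ^+ 2) ^+ r = ((u ^+ 2) ^+ 2)^-1 by rewrite exprAC hUr exprVn.
have hvq : (u ^+ 2) ^+ q = u ^+ 2 * U ^+ 2 by rewrite exprAC huq exprMn.
have hPq : (U ^+ 2) ^+ q = ((u ^+ 2) ^+ 2 * U ^+ 2)^-1 by rewrite exprAC hUq exprVn exprMn.
have v0 : u ^+ 2 != 0 by rewrite expf_neq0.
have P0 : U ^+ 2 != 0 by rewrite expf_neq0.
have hG := core ch2 k0 v0 P0 u21 U21 hv2P hvP hvr hPr hvq hPq.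
have hv21 : (u ^+ 2) ^+ 2 + 1 != 0.
  by rewrite -[1](expr1n _ 2) -(sqrD2 ch2) expf_neq0 // (add1_eq0 ch2).
have hv2P1 : (u ^+ 2) ^+ 2 * U ^+ 2 + 1 != 0 by rewrite (add1_eq0 ch2).
have hP1 : U ^+ 2 + 1 != 0 by rewrite (add1_eq0 ch2).
have hzr := zr ch2 v0 hv21 hvr hPr.
have hzq := zq ch2 v0 P0 hv2P1 hvq hPq.
rewrite huq1.
set b := U + U^-1.
have b0 : b != 0.
  have -> : b = (U ^+ 2 + 1) / U by rewrite /b; field.
  by rewrite mulf_neq0 ?invr_eq0.
have hbq : b ^+ q = (u ^+ 2 * U)^-1 + u ^+ 2 * U by rewrite (frD ch2) exprVn hUq invrK.
have hbqq : (b ^+ q) ^+ q = b.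
  rewrite hbq (frD ch2) exprVn exprMn exprAC huq hUq /b; field; nz.
have hbr : b ^+ r = (u ^+ 2)^-1 + u ^+ 2 by rewrite (frD ch2) exprVn hUr invrK.
have hbqr : (b ^+ q) ^+ r = ((u ^+ 2 * U) ^+ 2 * (u ^+ 2)^-1)^-1 + (u ^+ 2 * U) ^+ 2 * (u ^+ 2)^-1.
  by rewrite hbq (frD ch2) exprVn exprMn exprAC hur hUr.
set c := b ^+ (q - 1).
have hc : c = b ^+ q / b.
  apply: (mulIf b0); rewrite divfK // /c -exprSr subn1 prednK //; by rewrite eq nat6.
have bq0 : b ^+ q != 0 by rewrite expf_neq0.
have hcq : c ^+ q = b / b ^+ q by rewrite hc expr_div_n hbqq.
have hcr : c ^+ r = (b ^+ q) ^+ r / b ^+ r by rewrite hc expr_div_n.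
exists (((u ^+ 2) ^+ 2 * U ^+ 2 + 1) / (U ^+ 2 + 1)); split => //.
- rewrite hzr !exprD expr1 !exprMn hcq hcr hur huq hc hbqr hbr hbq /b.
  field; nz.
  all: try by rewrite -expr2 addrC (add1_eq0 ch2) exprMn.
- rewrite -/q in hzq; rewrite hzq expnS mulnC exprM -/r hur; field; nz; by rewrite (exprM u 2 2).
by rewrite /c mulf_neq0 ?expf_neq0.
Qed.
End ULevel.

Lemma nat8 (a i : nat) : (2 <= a -> i < a.-1 -> (i * (2 * a)).+2 <= 2*a*a + 1 - 2*a)%N.
Proof. move=> ha hi; have : (i <= a - 2)%N by lia. nia. Qed.
Lemma nat9 (a b : nat) : (2 <= a -> 2 * b <= a -> 1 <= b ->
  (b * (2 * a - 2) + ((2 * a) * (b - 1))).+2 <= 2*a*a + 1 - 2*a)%N.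
Proof. nia. Qed.
Lemma nat10 (a : nat) : (2 <= a -> (2*a*a + 2*a + 1) * (2*a*a + 1 - 2*a) = (2*a*a) ^ 2 + 1)%N.
Proof. move=> ha; rewrite expnS expn1. nia. Qed.

Section Final1.
Variable E : fieldType.
Hypothesis ch2 : 2 \in [pchar E].

Lemma G1 k : (0 < k)%N -> G (k.*2.+1) (1 : E) = 0.
Proof.
move=> k0; case: (par k) => hr hs hl hq.
rewrite /G hs hl !mul1r !expr1n.
under eq_bigr => i _ do rewrite expr1n.
under [X in _ + X]eq_bigr => i _ do rewrite !expr1n mul1r (addrr_pchar2 ch2).
rewrite sumr_const card_ord (addrr_pchar2 ch2) add0r.
case: k k0 {hr hs hl hq} => // k _.
rewrite big_ord_recl /= expr0 big1 ?addr0; last first.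
  move=> i _; rewrite expr0n /=.
  have -> : (2 ^ (bump 0 i) - 1 == 0)%N = false.
    apply/negbTE; rewrite subn_eq0 -ltnNge /bump /= add1n.
    by rewrite -{1}(expn0 2) ltn_exp2l.
  by [].
have ho : odd (2 ^ k.+1).-1 by rewrite -subn1 oddB ?expn_gt0 // oddX.
rewrite -[(2 ^ k.+1).-1]odd_double_half ho natrD -muln2 natrM (two0 ch2) mulr0 addr0.
by rewrite (addrr_pchar2 ch2).
Qed.

Lemma Q1_G k (x : E) : (0 < k)%N -> Q1 (k.*2.+1) x = G (k.*2.+1) (x ^+ tt (k.*2.+1)).
Proof.
move=> k0; have [er eq a2] := natf k0.
rewrite /Q1 /G /Rpoly /ss /tt; case: (par k) => -> -> -> ->.
congr (_ + _ + _ * _ + _ * _).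
- rewrite -exprM; congr (x ^+ _); rewrite er eq nat10 //.
- by apply: eq_bigr => i _; rewrite -exprM mulnC.
- apply: eq_bigr => i _; congr (_ * (1 + _) ^+ _); by rewrite -exprM mulnC.
Qed.

Definition Gp m : {poly E} := 'X^(ss m) + 1 + 'X * \sum_(i < (sqq2 m).-1) 'X^(i * sq2q m)
  + 'X * \sum_(j < log_sqq2 m) 'X^(2 ^ j * (sq2q m - 2)) * (1 + 'X^(sq2q m)) ^+ (2 ^ j - 1).

Lemma Gp_eval m w : (Gp m).[w] = G m w.
Proof.
have horner1 : forall x : E, (1 : {poly E}).[x] = 1 by move=> x; rewrite -polyC1 hornerC.
rewrite /Gp /G !hornerD !hornerM hornerX hornerXn horner1 !horner_sum.
congr (_ + _ + _ * _ + _ * _); apply: eq_bigr => i _.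
  by rewrite hornerXn.
by rewrite hornerM !horner_exp hornerD horner1 !horner_exp !hornerX.
Qed.

Lemma size_Xmul_sum n (F : 'I_n -> {poly E}) c :
  (forall i, (size (F i) <= c)%N) -> leq (size ('X * \sum_(i < n) F i)) c.+1.
Proof.
move=> h; apply: leq_trans (size_mul_leq _ _) _; rewrite size_polyX /= ltnS.
apply: leq_trans (size_sum _ _ _) _; apply/bigmax_leqP => i _; exact: h.
Qed.

Lemma Gp_size k : (0 < k)%N -> size (Gp (k.*2.+1)) = (ss (k.*2.+1)).+1.
Proof.
move=> k0; have [er eq a2] := natf k0.
rewrite /Gp -!addrA size_polyDl size_polyXn //.
rewrite /ss; case: (par k) => -> -> -> ->.
rewrite er eq.
apply: leq_ltn_trans (size_polyD _ _) _; rewrite gtn_max size_poly1 ltnS; apply/andP; split; first exact: nat5.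
apply: leq_ltn_trans (size_polyD _ _) _; rewrite gtn_max ltnS; apply/andP; split.
  apply: (@leq_trans (2 * 2 ^ k * 2 ^ k + 1 - 2 * 2 ^ k).-1.+1); last first.
    by rewrite prednK // nat5.
  apply: size_Xmul_sum => i; rewrite size_polyXn -ltnS prednK ?nat5 //.
  exact: nat8.
rewrite ltnS; apply: (@leq_trans (2 * 2 ^ k * 2 ^ k + 1 - 2 * 2 ^ k).-1.+1); last first.
  by rewrite prednK // nat5.
apply: size_Xmul_sum => j.
apply: leq_trans (size_mul_leq _ _) _; rewrite size_polyXn /=.
have h1 : leq (size ((1 : {poly E}) + 'X^(2 * 2 ^ k))) (2 * 2 ^ k).+1.
  apply: leq_trans (size_polyD _ _) _; rewrite size_poly1 size_polyXn geq_max; lia.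
have h2 : leq (size (((1 : {poly E}) + 'X^(2 * 2 ^ k)) ^+ (2 ^ j - 1))) ((2 * 2 ^ k) * (2 ^ j - 1)).+1.
  apply: leq_trans (leqSpred _) _; rewrite ltnS size_exp leq_mul2r; apply/orP; right.
  by rewrite -subn1 leq_subLR add1n.
apply: leq_trans (leq_add (leqnn _) h2) _.
rewrite addnS -ltnS prednK ?nat5 //.
apply: nat9 => //; last by rewrite expn_gt0.
by rewrite -expnS leq_exp2l // ltn_ord.
Qed.

End Final1.

Lemma prim_exists (E : finFieldType) : (1 < #|E|)%N -> exists h : E, (#|E|.-1).-primitive_root h.
Proof.
move=> hE.
have H : has (#|E|.-1).-primitive_root (enum [pred y : E | y != 0]).
  apply: has_prim_root.
- by rewrite -ltnS prednK // ltnW.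
- apply/allP => y; rewrite mem_enum inE => y0; apply/unity_rootP.
  apply: (mulIf y0); rewrite mul1r -exprSr prednK ?expf_card //; exact: ltnW.
- exact: enum_uniq.
- by rewrite -cardE cardC1.
by case/hasP: H => y _ hy; exists y.
Qed.

Lemma nat11 (a : nat) : (2 <= a -> 0 < 2*a*a + 1 - 2*a)%N. Proof. nia. Qed.

Theorem theorem4p6 (m : nat) (E : finFieldType) :
  odd m -> (3 <= m)%N -> #|E| = (qq m ^ 4)%N ->
  forall x : E, Q1 m x = 0 <-> T1 m x.
Proof.
move=> hodd hm hcard x.
have [k hk k0] : exists2 k, m = k.*2.+1 & (0 < k)%N.
  exists m./2; first by rewrite -{1}(odd_double_half m) hodd add1n.
  have := odd_double_half m; rewrite hodd -muln2; lia.
subst m.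
have ch2 : 2 \in [pchar E].
  by apply: (@card_finPcharP _ _ (4 * k.*2.+1)) => //; rewrite hcard /qq -expnM mulnC.
have [er eq a2] := natf k0.
rewrite (Q1_G x k0) /T1 /ss /tt; case: (par k) => hr hs hl hq; rewrite hq hr.
split; last first.
case => [hx1 | [u [v [hu u1 hv ->]]]].
  by rewrite hx1; exact: G1.
have [z [hcu hG hzq cu0]] := ulem ch2 k0 hu u1.
by rewrite exprMn hv mulr1 hcu (G_fr ch2) hG expr0n expn_eq0.
set q := (2 ^ k.*2.+1)%N in hq eq *.
set r := (2 ^ k.+1)%N in hr er *.
set t := (q + r + 1)%N.
set s := (q + 1 - r)%N.
move=> hG.
case: (eqVneq (x ^+ t) 1) => [-> | w1]; first by left.
right.
have hE : (1 < #|E|)%N.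
  by rewrite hcard /qq -expnM -[1%N](expn0 2) ltn_exp2l // muln_gt0.
have [h hprim] := prim_exists hE.
have s0 : (0 < s)%N by rewrite /s er eq nat11.
have sN : (s %| #|E|.-1)%N.
  rewrite hcard /qq -/q -subn1 -(exp1n 2) -[4%N]/(2 * 2)%N expnM subn_sqr.
  apply: dvdn_mull.
  have -> : (q ^ 2 + 1 = t * s)%N by rewrite /t /s er eq nat10.
  exact: dvdn_mull.
have gprim := dvdn_prim_root hprim sN.
set g := h ^+ (#|E|.-1 %/ s) in gprim.
set us := [seq g ^+ i.+1 | i <- iota 0 s.-1].
have husP : forall u, u \in us -> u ^+ s = 1 /\ u != 1.
  move=> u /mapP [i]; rewrite mem_iota add0n => hi ->; split.
    by rewrite exprAC (prim_expr_order gprim) expr1n.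
  rewrite -(expr0 g) (eq_prim_root_expr gprim) mod0n modn_small //.
  by rewrite -(prednK s0) ltnS.
set cf := fun u : E => (u ^+ (q - 1) + (u ^+ (q - 1))^-1) ^+ (q - 1) * u.
set L := [seq cf u ^+ t | u <- us].
case: (boolP (x ^+ t \in L)).
  case/mapP => u uin hxu; have [hu u1] := husP u uin.
  have [z [hcu hGz hzq cu0]] := ulem ch2 k0 hu u1.
  exists u, (x / cf u); split => //.
    by rewrite expr_div_n hxu divff // expf_neq0.
  by rewrite -/(cf u) mulrC divfK.
move=> xL; exfalso.
have Gp0 : Gp E (k.*2.+1) != 0 by rewrite -size_poly_eq0 (Gp_size ch2 k0).
have hLz : forall u, u \in us -> exists z, [/\ cf u ^+ t = z ^+ r, G (k.*2.+1) z = 0 &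
    z ^+ q * z = u ^+ (2 ^ k.+2)].
  move=> u uin; have [hu u1] := husP u uin.
  have [z [hcu hGz hzq _]] := ulem ch2 k0 hu u1.
  by exists z; split.
have hroot : all (root (Gp E (k.*2.+1))) (x ^+ t :: 1 :: L).
  rewrite /= /root !Gp_eval hG (G1 ch2 k0) eqxx /=.
  apply/allP => w /mapP [u uin ->]; have [z [hcu hGz _]] := hLz u uin.
  by rewrite /root Gp_eval hcu (G_fr ch2) hGz expr0n expn_eq0.
have huniq : uniq (x ^+ t :: 1 :: L).
  rewrite /= in_cons (negbTE w1) (negbTE xL) /=; apply/andP; split.
    apply/negP => /mapP [u uin h1]; have [z [hcu _ hzq]] := hLz u uin.
    have [_ u1] := husP u uin; move: hcu; rewrite -h1 => /esym /(@fr_eq1 _ ch2 k.+1) z1.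
    move: hzq; rewrite z1 expr1n mulr1 => /esym /(@fr_eq1 _ ch2 k.+2) hu1.
    by rewrite hu1 eqxx in u1.
  rewrite map_inj_in_uniq.
    rewrite map_inj_in_uniq ?iota_uniq // => i j.
    rewrite !mem_iota !add0n => /andP[_ hi] /andP[_ hj] /eqP.
    have hi' : (i.+1 < s)%N by rewrite -(prednK s0) ltnS.
    have hj' : (j.+1 < s)%N by rewrite -(prednK s0) ltnS.
    by rewrite (eq_prim_root_expr gprim) !modn_small // eqSS => /eqP.
  move=> u1 u2 u1in u2in h12.
  have [z1 [hc1 _ hq1]] := hLz u1 u1in; have [z2 [hc2 _ hq2]] := hLz u2 u2in.
  have ez : z1 = z2 by apply: (@fr_inj _ ch2 k.+1); rewrite -hc1 -hc2.
  by apply: (@fr_inj _ ch2 k.+2); rewrite -hq1 -hq2 ez.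
have := max_poly_roots Gp0 hroot huniq.
rewrite /= !size_map size_iota (Gp_size ch2 k0) /ss hq hr -/s (prednK s0).
by rewrite ltnn.
Qed.
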